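(* Let $C$ be a Reedy category, let $\Gamma$ be one of $\int N(C)$, $\int N^{-,+}(C)$, $\int N^{--,+}_+(C)$, $\mathrm{Down}_*(C)$, $\mathrm{Down}(C)$, and let $\mathrm{last}\colon\Gamma\to C$ be the last component functor. Let $F,G\colon C\to D$ be functors. Then for every natural transformation $\epsilon\colon F\circ\mathrm{last}\Rightarrow G\circ\mathrm{last}$ there is a unique natural transformation $\tilde\epsilon\colon F\Rightarrow G$ with $\tilde\epsilon\,\mathrm{last}=\epsilon$ (right whiskering).
   Context: A Reedy category $(C,C_-,C_+)$: wide subcategories with unique factorization of every morphism as ($C_-$ then $C_+$), every morphism of $C_\pm$ decidably identity or not, and the relation ($x<'y$ iff non-identity $x\to y$ in $C_+$ or non-identity $y\to x$ in $C_-$) well-founded. $\Delta$: finite ordinals $[n]$ and order-preserving maps. $\int N(C)$: objects $([n],X)$ with $X\colon[n]\to C$ a functor; morphisms $([m],X)\to([n],Y)$ are $(\alpha,\theta)$, $\alpha\colon[m]\to[n]$ in $\Delta$, $\theta\colon X\Rightarrow Y\circ\alpha$; composition $(\beta,\varphi)\circ(\alpha,\theta)=(\beta\alpha,(\varphi\alpha)\circ\theta)$. $\int N^{-,+}(C)$: subcategory of objects with $X$ sending all morphisms into $C_-$ and morphisms with all $\theta_i\in C_+$. $\int N^{--,+}_+(C)$: its subcategory of objects whose $X$ reflects identities and morphisms with $\alpha$ injective. Order on hom-sets: $(\alpha,\theta)\le(\alpha',\theta')$ iff $\alpha\le\alpha'$ pointwise and $\theta'_i=Y(\alpha(i)\le\alpha'(i))\circ\theta_i$;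 $\mathrm{Down}_*(C)$, $\mathrm{Down}(C)$ are the quotients of $\int N^{-,+}(C)$, $\int N^{--,+}_+(C)$ by the equivalence relation generated by $\le$ on hom-sets. $\mathrm{last}([n],X)=X(n)$, $\mathrm{last}(\alpha,\theta)=Y(\alpha(m)\le n)\circ\theta_m$ for $(\alpha,\theta)\colon([m],X)\to([n],Y)$, descending to the quotients. *)

(* Defs.v *)
(* (ordinals 'I_n.+1 model the finite ordinals [n] of Delta). *)
From mathcomp Require Import all_boot.
From Stdlib Require Import Relations ClassicalEpsilon.

Set Implicit Arguments.
Unset Strict Implicit.
Unset Printing Implicit Defensive.

Record Cat := {
  Obj : Type;
  Hom : Obj -> Obj -> Type;
  idm : forall x, Hom x x;
  comp : forall x y z, Hom y z -> Hom x y -> Hom x z }.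

Arguments Hom {c} x y.
Arguments idm {c} x.
Arguments comp {c x y z} g f.

Definition is_cat (C : Cat) : Prop :=
  [/\ (forall (x y : Obj C) (f : Hom x y), comp (idm y) f = f),
      (forall (x y : Obj C) (f : Hom x y), comp f (idm x) = f) &
      (forall (x y z w : Obj C) (f : Hom x y) (g : Hom y z) (h : Hom z w),
          comp h (comp g f) = comp (comp h g) f)].

Record Functor (A B : Cat) := {
  fobj : Obj A -> Obj B;
  fmor : forall x y : Obj A, Hom x y -> Hom (fobj x) (fobj y) }.

Arguments fobj {A B} f x.
Arguments fmor {A B} f {x y} u.

Definition is_functor (A B : Cat) (F : Functor A B) : Prop :=
  (forall x : Obj A, fmor F (idm x) = idm (fobj F x)) /\
  (forall (x y z : Obj A) (f : Hom x y) (g : Hom y z),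
      fmor F (comp g f) = comp (fmor F g) (fmor F f)).

Definition Fcomp (A B E : Cat) (F : Functor B E) (L : Functor A B) : Functor A E :=
  {| fobj := fun x => fobj F (fobj L x);
     fmor := fun x y u => fmor F (fmor L u) |}.

Definition is_natural (A B : Cat) (F G : Functor A B)
  (e : forall x : Obj A, Hom (fobj F x) (fobj G x)) : Prop :=
  forall (x y : Obj A) (f : Hom x y), comp (fmor G f) (e x) = comp (e y) (fmor F f).

Arguments is_natural {A B} F G e.

Definition whisker (A B E : Cat) (F G : Functor B E)
  (e : forall x : Obj B, Hom (fobj F x) (fobj G x)) (L : Functor A B) :
  forall x : Obj A, Hom (fobj (Fcomp F L) x) (fobj (Fcomp G L) x) :=
  fun x => e (fobj L x).

Arguments whisker {A B E F G} e L x.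

Definition is_id (C : Cat) (x y : Obj C) (f : Hom x y) : Prop :=
  exists e : x = y,
    (match e in _ = y' return Hom x y' -> Prop with
     | erefl => fun g => g = idm x end) f.

Record Reedy (C : Cat) := {
  Rm : forall x y : Obj C, Hom x y -> Prop;
  Rp : forall x y : Obj C, Hom x y -> Prop;
  Rm_id : forall x, Rm (idm x);
  Rp_id : forall x, Rp (idm x);
  Rm_comp : forall (x y z : Obj C) (f : Hom x y) (g : Hom y z),
      Rm f -> Rm g -> Rm (comp g f);
  Rp_comp : forall (x y z : Obj C) (f : Hom x y) (g : Hom y z),
      Rp f -> Rp g -> Rp (comp g f);
  R_fact : forall (x y : Obj C) (f : Hom x y),
      exists (z : Obj C) (g : Hom x z) (h : Hom z y),
        [/\ Rm g, Rp h, f = comp h g &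
         forall (z' : Obj C) (g' : Hom x z') (h' : Hom z' y),
           Rm g' -> Rp h' -> f = comp h' g' ->
           existT (fun w => (Hom x w * Hom w y)%type) z (g, h)
           = existT (fun w => (Hom x w * Hom w y)%type) z' (g', h')];
  Rm_dec : forall (x y : Obj C) (f : Hom x y), Rm f -> {is_id f} + {~ is_id f};
  Rp_dec : forall (x y : Obj C) (f : Hom x y), Rp f -> {is_id f} + {~ is_id f};
  R_wf : well_founded (fun x y : Obj C =>
      (exists f : Hom x y, Rp f /\ ~ is_id f) \/
      (exists f : Hom y x, Rm f /\ ~ is_id f)) }.

Arguments Rm {C} r {x y} f.
Arguments Rp {C} r {x y} f.

(* [n] is 'I_n.+1 with its order; a functor X : [n] -> C is given by its    *)
(* values on objects and on the arrows i <= j.                              *)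

Record NObj (C : Cat) := {
  ndim : nat;
  nob : 'I_ndim.+1 -> Obj C;
  nmor : forall i j : 'I_ndim.+1, (i <= j)%N -> Hom (nob i) (nob j);
  nmor_id : forall (i : 'I_ndim.+1) (h : (i <= i)%N), nmor h = idm (nob i);
  nmor_comp : forall (i j k : 'I_ndim.+1) (hij : (i <= j)%N) (hjk : (j <= k)%N)
      (hik : (i <= k)%N), comp (nmor hjk) (nmor hij) = nmor hik }.

Arguments nob {C} n i.
Arguments nmor {C} n {i j} h.

Record NHom (C : Cat) (X Y : NObj C) := {
  hal : 'I_(ndim X).+1 -> 'I_(ndim Y).+1;
  hal_mono : forall i j : 'I_(ndim X).+1, (i <= j)%N -> (hal i <= hal j)%N;
  hth : forall i, Hom (nob X i) (nob Y (hal i));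
  hth_nat : forall (i j : 'I_(ndim X).+1) (h : (i <= j)%N) (h' : (hal i <= hal j)%N),
      comp (nmor Y h') (hth i) = comp (hth j) (nmor X h) }.

Arguments hal {C X Y} n i.
Arguments hth {C X Y} n i.
Arguments hal_mono {C X Y} n {i j} h.
Arguments hth_nat {C X Y} n {i j} h h'.

Section IntN.
Variables (C : Cat) (HC : is_cat C).

Lemma NHom_id_nat (X : NObj C) (i j : 'I_(ndim X).+1) (h h' : (i <= j)%N) :
  comp (nmor X h') (idm (nob X i)) = comp (idm (nob X j)) (nmor X h).
Proof.
case: HC => idl idr _; rewrite idl idr; congr (nmor X _); exact: eq_irrelevance.
Qed.

Definition NHom_id (X : NObj C) : NHom X X :=
  {| hal := id; hal_mono := fun i j h => h;
     hth := fun i => idm (nob X i); hth_nat := @NHom_id_nat X |}.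

Lemma NHom_comp_mono (X Y Z : NObj C) (v : NHom Y Z) (u : NHom X Y)
  (i j : 'I_(ndim X).+1) : (i <= j)%N -> (hal v (hal u i) <= hal v (hal u j))%N.
Proof. by move=> h; apply: hal_mono; apply: hal_mono. Qed.

Lemma NHom_comp_nat (X Y Z : NObj C) (v : NHom Y Z) (u : NHom X Y)
  (i j : 'I_(ndim X).+1) (h : (i <= j)%N)
  (h' : (hal v (hal u i) <= hal v (hal u j))%N) :
  comp (nmor Z h') (comp (hth v (hal u i)) (hth u i))
  = comp (comp (hth v (hal u j)) (hth u j)) (nmor X h).
Proof.
case: HC => _ _ ass.
rewrite ass (hth_nat v (hal_mono u h) h') -ass (hth_nat u h) ass //.
Qed.

Definition NHom_comp (X Y Z : NObj C) (v : NHom Y Z) (u : NHom X Y) : NHom X Z :=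
  {| hal := fun i => hal v (hal u i);
     hal_mono := @NHom_comp_mono X Y Z v u;
     hth := fun i => comp (hth v (hal u i)) (hth u i);
     hth_nat := @NHom_comp_nat X Y Z v u |}.

Definition IntN : Cat :=
  {| Obj := NObj C; Hom := @NHom C; idm := NHom_id; comp := NHom_comp |}.

Definition hle (X Y : NObj C) (u v : NHom X Y) : Prop :=
  exists le : forall i, (hal u i <= hal v i)%N,
    forall i, hth v i = comp (nmor Y (le i)) (hth u i).

Definition lastN : Functor IntN C :=
  @Build_Functor IntN C (fun X : NObj C => nob X ord_max)
     (fun (X Y : NObj C) (u : NHom X Y) =>
       comp (nmor Y (leq_ord (hal u ord_max) : (hal u ord_max <= @ord_max (ndim Y))%N))
            (hth u ord_max)).

End IntN.

Section SubCat.
Variables (A : Cat) (P : Obj A -> Prop) (Q : forall x y : Obj A, Hom x y -> Prop).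
Hypothesis Qid : forall x, Q (idm x).
Hypothesis Qcomp : forall (x y z : Obj A) (f : Hom x y) (g : Hom y z),
  Q f -> Q g -> Q (comp g f).

Definition SubCat : Cat :=
  {| Obj := {x : Obj A | P x};
     Hom := fun x y => {f : Hom (proj1_sig x) (proj1_sig y) | Q f};
     idm := fun x => exist _ (idm (proj1_sig x)) (Qid (proj1_sig x));
     comp := fun x y z g f =>
       exist _ (comp (proj1_sig g) (proj1_sig f))
               (Qcomp (proj2_sig f) (proj2_sig g)) |}.

Definition SubFun (B : Cat) (L : Functor A B) : Functor SubCat B :=
  @Build_Functor SubCat B (fun x : {x : Obj A | P x} => fobj L (proj1_sig x))
     (fun (x y : {x : Obj A | P x}) (f : {f : Hom (proj1_sig x) (proj1_sig y) | Q f}) =>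
        fmor L (proj1_sig f)).
End SubCat.

Section QuotCat.
Variables (A : Cat) (E : forall x y : Obj A, Hom x y -> Hom x y -> Prop).

Definition genE (x y : Obj A) := clos_refl_sym_trans (Hom x y) (@E x y).

Definition QHom (x y : Obj A) :=
  {c : Hom x y -> Prop | exists f : Hom x y, c = genE f}.

Definition qcls (x y : Obj A) (f : Hom x y) : QHom x y :=
  exist _ (genE f) (ex_intro _ f erefl).

Definition qrep (x y : Obj A) (c : QHom x y) : Hom x y :=
  proj1_sig (constructive_indefinite_description _ (proj2_sig c)).

Definition QuotCat : Cat :=
  {| Obj := Obj A; Hom := QHom;
     idm := fun x => qcls (idm x);
     comp := fun x y z g f => qcls (comp (qrep g) (qrep f)) |}.

(* the functor induced on the quotient by a functor L that descends *)
Definition QuotFun (B : Cat) (L : Functor A B) : Functor QuotCat B :=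
  @Build_Functor QuotCat B (fun x : Obj A => fobj L x)
     (fun (x y : Obj A) (c : QHom x y) => fmor L (qrep c)).
End QuotCat.

Section Gammas.
Variables (C : Cat) (HC : is_cat C) (R : Reedy C).

Definition minus_obj (X : NObj C) : Prop :=
  forall (i j : 'I_(ndim X).+1) (h : (i <= j)%N), Rm R (nmor X h).
Definition plus_hom (X Y : NObj C) (u : NHom X Y) : Prop :=
  forall i, Rp R (hth u i).

Lemma plus_hom_id (X : NObj C) : plus_hom (NHom_id HC X).
Proof. by move=> i; apply: Rp_id. Qed.

Lemma plus_hom_comp (X Y Z : NObj C) (u : NHom X Y) (v : NHom Y Z) :
  plus_hom u -> plus_hom v -> plus_hom (NHom_comp HC v u).
Proof. by move=> hu hv i; apply: Rp_comp. Qed.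

Definition IntNmp : Cat :=
  SubCat (A := IntN HC) minus_obj (Q := plus_hom) plus_hom_id plus_hom_comp.

Definition refl_id_obj (X : Obj IntNmp) : Prop :=
  forall (i j : 'I_(ndim (proj1_sig X)).+1) (h : (i <= j)%N),
    is_id (nmor (proj1_sig X) h) -> i = j.
Definition inj_hom (X Y : Obj IntNmp) (u : Hom X Y) : Prop :=
  injective (hal (proj1_sig u)).

Lemma inj_hom_id (X : Obj IntNmp) : inj_hom (idm X).
Proof. by move=> i j. Qed.

Lemma inj_hom_comp (X Y Z : Obj IntNmp) (u : Hom X Y) (v : Hom Y Z) :
  inj_hom u -> inj_hom v -> inj_hom (comp v u).
Proof. by move=> hu hv i j /hv /hu. Qed.

Definition IntNmmp : Cat :=
  SubCat (A := IntNmp) refl_id_obj (Q := inj_hom) inj_hom_id inj_hom_comp.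

Definition lastNmp : Functor IntNmp C :=
  @SubFun (IntN HC) minus_obj (@plus_hom) plus_hom_id plus_hom_comp C (lastN HC).
Definition lastNmmp : Functor IntNmmp C :=
  @SubFun IntNmp refl_id_obj (@inj_hom) inj_hom_id inj_hom_comp C lastNmp.

Definition DownStar : Cat :=
  QuotCat (A := IntNmp) (fun X Y u v => hle (proj1_sig u) (proj1_sig v)).
Definition Down : Cat :=
  QuotCat (A := IntNmmp)
    (fun X Y u v => hle (proj1_sig (proj1_sig u)) (proj1_sig (proj1_sig v))).

Definition lastDownStar : Functor DownStar C := @QuotFun IntNmp _ C lastNmp.
Definition lastDown : Functor Down C := @QuotFun IntNmmp _ C lastNmmp.

Inductive GammaKind := K_IntN | K_IntNmp | K_IntNmmp | K_DownStar | K_Down.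

Definition Gamma (k : GammaKind) : Cat :=
  match k with
  | K_IntN => IntN HC
  | K_IntNmp => IntNmp
  | K_IntNmmp => IntNmmp
  | K_DownStar => DownStar
  | K_Down => Down
  end.

Definition lastF (k : GammaKind) : Functor (Gamma k) C :=
  match k as k0 return Functor (Gamma k0) C with
  | K_IntN => lastN HC
  | K_IntNmp => lastNmp
  | K_IntNmmp => lastNmmp
  | K_DownStar => lastDownStar
  | K_Down => lastDown
  end.

End Gammas.

(* Main.v *)
Require Import Defs.
From mathcomp Require Import all_boot.
Require Import Defs.
From Stdlib Require Import Relations.

Set Implicit Arguments.
Unset Strict Implicit.
Unset Printing Implicit Defensive.


Section Abs.
Variables (C D Γ : Cat) (HD : is_cat D) (L : Functor Γ C) (F G : Functor C D).
Hypotheses (HF : is_functor F) (HG : is_functor G).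
Variable eps : forall x : Obj Γ, Hom (fobj (Fcomp F L) x) (fobj (Fcomp G L) x).
Hypothesis Heps : is_natural (Fcomp F L) (Fcomp G L) eps.
Variables (pt : Obj C -> Obj Γ) (j : forall c, Hom (fobj L (pt c)) c)
  (j' : forall c, Hom c (fobj L (pt c))).
Hypotheses (jj' : forall c, comp (j c) (j' c) = idm c)
  (j'j : forall c, comp (j' c) (j c) = idm _).
Hypothesis H1 : forall x, exists u : Hom (pt (fobj L x)) x, fmor L u = j (fobj L x).
Hypothesis H2 : forall P : forall c d : Obj C, Hom c d -> Prop,
  (forall x y (u : Hom x y), P _ _ (fmor L u)) -> (forall c, P _ _ (j c)) ->
  (forall c, P _ _ (j' c)) ->
  (forall a b c (f : Hom a b) (g : Hom b c), P _ _ f -> P _ _ g -> P _ _ (comp g f)) ->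
  forall c d (f : Hom c d), P c d f.

Definition et c : Hom (fobj F c) (fobj G c) :=
  comp (fmor G (j c)) (comp (eps (pt c)) (fmor F (j' c))).

Lemma claim1 x : eps x = et (fobj L x).
Proof.
have [u hu] := H1 x.
have := Heps u; rewrite /= hu => e.
case: HD => idlD idrD assD.
by rewrite /et assD e -assD -(proj2 HF) jj' (proj1 HF) idrD.
Qed.

Lemma abs_main : exists et : forall c : Obj C, Hom (fobj F c) (fobj G c),
    [/\ is_natural F G et,
        (forall x, whisker et L x = eps x) &
        (forall et' : forall c : Obj C, Hom (fobj F c) (fobj G c),
           is_natural F G et' ->
           (forall x, whisker et' L x = eps x) ->
           forall c, et' c = et c)].
Proof.
case: HD => idlD idrD assD.
exists et; split.
- move=> c d f; pattern c, d, f; apply: H2.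
  + move=> x y u; rewrite -!claim1; exact: (Heps u).
  + move=> c0; rewrite -claim1 /et.
    by rewrite -!assD -(proj2 HF) j'j (proj1 HF) idrD.
  + move=> c0; rewrite -claim1 /et.
    by rewrite assD -(proj2 HG) j'j (proj1 HG) idlD.
  + move=> a b c0 f0 g0 e1 e2.
    by rewrite (proj2 HG) (proj2 HF) -assD e1 assD e2 assD.
- by move=> x; rewrite /whisker claim1.
- move=> et' Hn Hw c.
  rewrite /et -Hw /whisker assD Hn -assD -(proj2 HF) jj' (proj1 HF) idrD.
  by [].
Qed.
End Abs.


Section Simp.
Variables (C : Cat) (HC : is_cat C).

Lemma cidl (x y : Obj C) (f : Hom x y) : comp (idm y) f = f.
Proof. by case: HC. Qed.
Lemma cidr (x y : Obj C) (f : Hom x y) : comp f (idm x) = f.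
Proof. by case: HC. Qed.
Lemma cass (x y z w : Obj C) (f : Hom x y) (g : Hom y z) (h : Hom z w) :
  comp h (comp g f) = comp (comp h g) f.
Proof. by case: HC. Qed.

Definition pt0 (c : Obj C) : NObj C.
refine {| ndim := 0; nob := fun _ => c; nmor := fun _ _ _ => idm c |}.
- by [].
- by move=> *; rewrite cidl.
Defined.

Definition ob1 (c z : Obj C) (n : nat) : Obj C := if n is 0 then c else z.
Definition mor1 (c z : Obj C) (g : Hom c z) (a b : nat) :
  (a <= b)%N -> Hom (ob1 c z a) (ob1 c z b) :=
  match a as a0, b as b0 return (a0 <= b0)%N -> Hom (ob1 c z a0) (ob1 c z b0) with
  | 0, 0 => fun _ => idm c
  | 0, S _ => fun _ => g
  | S _, 0 => fun h => False_rect _ (Bool.diff_false_true h)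
  | S _, S _ => fun _ => idm z
  end.

Lemma mor1_id c z (g : Hom c z) a (h : (a <= a)%N) : mor1 g h = idm _.
Proof. by case: a h. Qed.

Lemma mor1_comp c z (g : Hom c z) a b d (hab : (a <= b)%N) (hbd : (b <= d)%N)
  (had : (a <= d)%N) : comp (mor1 g hbd) (mor1 g hab) = mor1 g had.
Proof.
case: a hab had => [|a]; case: b hbd => [|b]; case: d => [|d] //= *;
  by rewrite ?cidl ?cidr.
Qed.

Definition Y1 (c z : Obj C) (g : Hom c z) : NObj C :=
  {| ndim := 1; nob := fun i => ob1 c z i;
     nmor := fun i j h => mor1 g h;
     nmor_id := fun i h => mor1_id g h;
     nmor_comp := fun i j k => @mor1_comp c z g i j k |}.

Lemma u0_nat c z (g : Hom c z) (i j : 'I_1) (h : (i <= j)%N)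
  (h' : (@ord0 1 <= @ord0 1)%N) :
  comp (nmor (Y1 g) h') (idm c) = comp (idm c) (nmor (pt0 c) h).
Proof. by []. Qed.

Definition u0 c z (g : Hom c z) : NHom (pt0 c) (Y1 g) :=
  @Build_NHom C (pt0 c) (Y1 g) (fun _ => ord0) (fun _ _ _ => leqnn 0)
     (fun _ => idm c) (@u0_nat c z g).

Lemma ux_nat (x : NObj C) (i j : 'I_1) (h : (i <= j)%N)
  (h' : (@ord_max (ndim x) <= @ord_max (ndim x))%N) :
  comp (nmor x h') (idm _) = comp (idm _) (nmor (pt0 (nob x ord_max)) h).
Proof. by rewrite nmor_id. Qed.

Definition ux (x : NObj C) : NHom (pt0 (nob x ord_max)) x :=
  @Build_NHom C (pt0 (nob x ord_max)) x (fun _ => ord_max) (fun _ _ _ => leqnn _)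
     (fun _ => idm _) (@ux_nat x).

Lemma u2_nat z d (h : Hom z d) (i j : 'I_1) (hh : (i <= j)%N)
  (h' : (i <= j)%N) :
  comp (nmor (pt0 d) h') h = comp h (nmor (pt0 z) hh).
Proof. by rewrite /= cidl cidr. Qed.

Definition u2 z d (h : Hom z d) : NHom (pt0 z) (pt0 d) :=
  @Build_NHom C (pt0 z) (pt0 d) id (fun _ _ h => h)
     (fun _ => h) (@u2_nat z d h).

Lemma last_u0 c z (g : Hom c z) : fmor (lastN HC) (u0 g) = g.
Proof. by rewrite /= cidr. Qed.
Lemma last_ux x : fmor (lastN HC) (ux x) = idm _.
Proof. by rewrite /= nmor_id cidr. Qed.
Lemma last_u2 z d (h : Hom z d) : fmor (lastN HC) (u2 h) = h.
Proof. by rewrite /= cidl. Qed.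

Variable R : Reedy C.

Lemma minus_pt0 c : minus_obj R (pt0 c).
Proof. move=> *; exact: Rm_id. Qed.
Lemma minus_Y1 c z (g : Hom c z) : Rm R g -> minus_obj R (Y1 g).
Proof.
move=> hg [[|i] hi] [[|j] hj] h /=; rewrite /mor1 //=; try exact: Rm_id.
Qed.
Lemma plus_u0 c z (g : Hom c z) : plus_hom R (u0 g).
Proof. move=> *; exact: Rp_id. Qed.
Lemma plus_ux x : plus_hom R (ux x).
Proof. move=> *; exact: Rp_id. Qed.
Lemma plus_u2 z d (h : Hom z d) : Rp R h -> plus_hom R (u2 h).
Proof. by move=> hh i. Qed.

Definition ptm c : Obj (IntNmp HC R) := exist _ (pt0 c) (@minus_pt0 c).

Lemma reflid_pt0 c : refl_id_obj (ptm c).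
Proof. by move=> i j _ _; rewrite !ord1. Qed.
Lemma reflid_Y1 c z (g : Hom c z) (hm : Rm R g) : ~ is_id g ->
  refl_id_obj (exist _ (Y1 g) (@minus_Y1 c z g hm) : Obj (IntNmp HC R)).
Proof.
move=> ng [[|[|i]] hi] [[|[|j]] hj] //= h hid; try by apply: val_inj.
Qed.
Lemma inj_I1 (T : Type) (f : 'I_1 -> T) : injective f.
Proof. by move=> i j _; rewrite !ord1. Qed.

End Simp.


Lemma H2gen (C : Cat) (R : Reedy C) (P : forall c d : Obj C, Hom c d -> Prop)
  (Pid : forall c, P c c (idm c))
  (Pc : forall (a b c : Obj C) (f : Hom a b) (g : Hom b c),
      P a b f -> P b c g -> P a c (comp g f))
  (Pg : forall c z (g : Hom c z), Rm R g -> ~ is_id g -> P c z g)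
  (Ph : forall z d (h : Hom z d), Rp R h -> P z d h) c d (f : Hom c d) : P c d f.
Proof.
have [z [g [h [gm hp -> _]]]] := R_fact R f.
apply: Pc; last exact: Ph.
case: (Rm_dec gm) => gid; last exact: Pg.
case: gid => e; case: z / e g h gm hp => g h _ _ /= ->; exact: Pid.
Qed.

Lemma quot_fmor (A B : Cat) (E : forall x y : Obj A, Hom x y -> Hom x y -> Prop)
  (L0 : Functor A B)
  (desc : forall x y (u v : Hom x y), E x y u v -> fmor L0 u = fmor L0 v)
  x y (u : Hom x y) : fmor (QuotFun E L0) (qcls E u) = fmor L0 u.
Proof.
rewrite /= /qrep; case: ClassicalEpsilon.constructive_indefinite_description => f /= hf.
have : genE E u f by rewrite hf; apply: rst_refl.
elim=> [a b /desc -> | a | a b _ -> | a b c _ -> _ ->] //.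
Qed.

Lemma desc_base (C : Cat) (HC : is_cat C) (X Y : NObj C) (u v : NHom X Y) :
  hle u v -> fmor (lastN HC) u = fmor (lastN HC) v.
Proof.
case=> le hv; rewrite /= (hv ord_max) (cass HC) nmor_comp.
  - exact: leq_ord.
  - move=> h; congr (comp (nmor Y _) _); exact: eq_irrelevance.
Qed.

Section Inst.
Variables (C : Cat) (HC : is_cat C) (R : Reedy C) (D : Cat) (HD : is_cat D)
  (F G : Functor C D) (HF : is_functor F) (HG : is_functor G).

Notation concl Γ L eps := (exists et : forall c : Obj C, Hom (fobj F c) (fobj G c),
    [/\ is_natural F G et,
        (forall x : Obj Γ, whisker et L x = eps x) &
        (forall et' : forall c : Obj C, Hom (fobj F c) (fobj G c),
           is_natural F G et' ->
           (forall x, whisker et' L x = eps x) ->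
           forall c, et' c = et c)]).

Lemma inst_IntN eps (Heps : is_natural (Fcomp F (lastN HC)) (Fcomp G (lastN HC)) eps) :
  concl (IntN HC) (lastN HC) eps.
Proof.
apply: (@abs_main _ _ _ HD _ _ _ HF HG _ Heps (@pt0 C HC) (fun c => idm c) (fun c => idm c)).
- by move=> c; rewrite (cidl HC).
- by move=> c; rewrite (cidl HC).
- move=> x; exists (ux HC x); exact: last_ux.
- move=> P PL Pj Pj' Pc; apply: (H2gen (R := R)) => //.
  + move=> c z g hm _; have := PL _ _ (u0 HC g); by rewrite last_u0.
  + move=> z d h _; have := PL _ _ (u2 HC h); by rewrite last_u2.
Qed.

Lemma inst_IntNmp eps (Heps : is_natural (Fcomp F (lastNmp HC R)) (Fcomp G (lastNmp HC R)) eps) :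
  concl (IntNmp HC R) (lastNmp HC R) eps.
Proof.
apply: (@abs_main _ _ _ HD _ _ _ HF HG _ Heps (@ptm C HC R) (fun c => idm c) (fun c => idm c)).
- by move=> c; rewrite (cidl HC).
- by move=> c; rewrite (cidl HC).
- move=> x; exists (exist (@plus_hom _ R _ _) (ux HC (proj1_sig x)) (fun i => Rp_id R _)); exact: last_ux.
- move=> P PL Pj Pj' Pc; apply: (H2gen (R := R)) => //.
  + move=> c z g hm _.
    have := PL (ptm HC R c) (exist _ (Y1 HC g) (@minus_Y1 C HC R c z g hm))
      (exist (@plus_hom _ R _ _) (u0 HC g) (fun i => Rp_id R _)).
    by rewrite /= (cidr HC).
  + move=> z d h hp.
    have := PL (ptm HC R z) (ptm HC R d) (exist (@plus_hom _ R _ _) (u2 HC h) (fun i => hp)).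
    by rewrite /= (cidl HC).
Qed.


Definition mkmp (X Y : Obj (IntNmp HC R)) (u : NHom (proj1_sig X) (proj1_sig Y))
  (p : plus_hom R u) : Hom X Y := exist _ u p.
Definition mkmm (X Y : Obj (IntNmmp HC R)) (u : Hom (proj1_sig X) (proj1_sig Y))
  (p : inj_hom u) : Hom X Y := exist _ u p.

Arguments mkmp {X Y} u p.
Arguments mkmm {X Y} u p.

Definition ptmm c : Obj (IntNmmp HC R) :=
  exist (@refl_id_obj _ HC R) (ptm HC R c) ltac:(apply: reflid_pt0).

Lemma inst_IntNmmp eps (Heps : is_natural (Fcomp F (lastNmmp HC R)) (Fcomp G (lastNmmp HC R)) eps) :
  concl (IntNmmp HC R) (lastNmmp HC R) eps.
Proof.
apply: (@abs_main _ _ _ HD _ _ _ HF HG _ Heps ptmm (fun c => idm c) (fun c => idm c)).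
- by move=> c; rewrite (cidl HC).
- by move=> c; rewrite (cidl HC).
- move=> x; exists (mkmm (X := ptmm _) (Y := x)
     (mkmp (X := ptm HC R _) (Y := proj1_sig x) (ux HC (proj1_sig (proj1_sig x))) (fun i => Rp_id R _))
     (@inj_I1 _ _)); exact: last_ux.
- move=> P PL Pj Pj' Pc; apply: (H2gen (R := R)) => //.
  + move=> c z g hm ng.
    pose Ym : Obj (IntNmp HC R) := exist (minus_obj R) (Y1 HC g) (@minus_Y1 C HC R c z g hm).
    pose Ymm : Obj (IntNmmp HC R) := exist (@refl_id_obj _ HC R) Ym (reflid_Y1 ng).
    have := PL (ptmm c) Ymm
      (mkmm (X := ptmm c) (Y := Ymm) (mkmp (X := ptm HC R c) (Y := Ym) (u0 HC g) (fun i => Rp_id R _))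
        (@inj_I1 _ _)).
    by rewrite /= (cidr HC).
  + move=> z d h hp.
    have := PL (ptmm z) (ptmm d) (mkmm (X := ptmm z) (Y := ptmm d)
       (mkmp (X := ptm HC R z) (Y := ptm HC R d) (u2 HC h) (fun i => hp)) (@inj_I1 _ _)).
    by rewrite /= (cidl HC).
Qed.

Lemma qDS (X Y : Obj (IntNmp HC R)) (u : Hom X Y) :
  fmor (lastDownStar HC R) (qcls _ u) = fmor (lastNmp HC R) u.
Proof. apply: quot_fmor => {}X {}Y {}u v /(desc_base HC); exact. Qed.

Lemma qD (X Y : Obj (IntNmmp HC R)) (u : Hom X Y) :
  fmor (lastDown HC R) (qcls _ u) = fmor (lastNmmp HC R) u.
Proof. apply: quot_fmor => {}X {}Y {}u v /(desc_base HC); exact. Qed.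

Lemma inst_DownStar eps (Heps : is_natural (Fcomp F (lastDownStar HC R)) (Fcomp G (lastDownStar HC R)) eps) :
  concl (DownStar HC R) (lastDownStar HC R) eps.
Proof.
apply: (@abs_main _ _ _ HD _ _ _ HF HG _ Heps (ptm HC R) (fun c => idm c) (fun c => idm c)).
- by move=> c; rewrite (cidl HC).
- by move=> c; rewrite (cidl HC).
- move=> x; exists (qcls _ (mkmp (X := ptm HC R _) (Y := x) (ux HC (proj1_sig x)) (fun i => Rp_id R _))).
  rewrite qDS; exact: last_ux.
- move=> P PL Pj Pj' Pc; apply: (H2gen (R := R)) => //.
  + move=> c z g hm _.
    pose Ym : Obj (IntNmp HC R) := exist (minus_obj R) (Y1 HC g) (@minus_Y1 C HC R c z g hm).
    have := PL (ptm HC R c) Ym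
      (qcls _ (mkmp (X := ptm HC R c) (Y := Ym) (u0 HC g) (fun i => Rp_id R _))).
    by rewrite qDS /= (cidr HC).
  + move=> z d h hp.
    have := PL (ptm HC R z) (ptm HC R d) (qcls _ (mkmp (X := ptm HC R z) (Y := ptm HC R d) (u2 HC h) (fun i => hp))).
    by rewrite qDS /= (cidl HC).
Qed.

Lemma inst_Down eps (Heps : is_natural (Fcomp F (lastDown HC R)) (Fcomp G (lastDown HC R)) eps) :
  concl (Down HC R) (lastDown HC R) eps.
Proof.
apply: (@abs_main _ _ _ HD _ _ _ HF HG _ Heps ptmm (fun c => idm c) (fun c => idm c)).
- by move=> c; rewrite (cidl HC).
- by move=> c; rewrite (cidl HC).
- move=> x; exists (qcls _ (mkmm (X := ptmm _) (Y := x)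
     (mkmp (X := ptm HC R _) (Y := proj1_sig x) (ux HC (proj1_sig (proj1_sig x))) (fun i => Rp_id R _))
     (@inj_I1 _ _))).
  rewrite qD; exact: last_ux.
- move=> P PL Pj Pj' Pc; apply: (H2gen (R := R)) => //.
  + move=> c z g hm ng.
    pose Ym : Obj (IntNmp HC R) := exist (minus_obj R) (Y1 HC g) (@minus_Y1 C HC R c z g hm).
    pose Ymm : Obj (IntNmmp HC R) := exist (@refl_id_obj _ HC R) Ym (reflid_Y1 ng).
    have := PL (ptmm c) Ymm
      (qcls _ (mkmm (X := ptmm c) (Y := Ymm) (mkmp (X := ptm HC R c) (Y := Ym) (u0 HC g) (fun i => Rp_id R _))
        (@inj_I1 _ _))).
    by rewrite qD /= (cidr HC).
  + move=> z d h hp.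
    have := PL (ptmm z) (ptmm d) (qcls _ (mkmm (X := ptmm z) (Y := ptmm d)
       (mkmp (X := ptm HC R z) (Y := ptm HC R d) (u2 HC h) (fun i => hp)) (@inj_I1 _ _))).
    by rewrite qD /= (cidl HC).
Qed.

End Inst.

Theorem lemma7p8 (C : Cat) (HC : is_cat C) (R : Reedy C) (k : GammaKind)
  (D : Cat) (HD : is_cat D) (F G : Functor C D)
  (HF : is_functor F) (HG : is_functor G)
  (eps : forall x : Obj (Gamma HC R k),
           Hom (fobj (Fcomp F (lastF HC R k)) x) (fobj (Fcomp G (lastF HC R k)) x))
  (Heps : is_natural (Fcomp F (lastF HC R k)) (Fcomp G (lastF HC R k)) eps) :
  exists et : forall c : Obj C, Hom (fobj F c) (fobj G c),
    [/\ is_natural F G et,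
        (forall x, whisker et (lastF HC R k) x = eps x) &
        (forall et' : forall c : Obj C, Hom (fobj F c) (fobj G c),
           is_natural F G et' ->
           (forall x, whisker et' (lastF HC R k) x = eps x) ->
           forall c, et' c = et c)].
Proof.
case: k eps Heps => eps Heps.
- exact: (inst_IntN R HD HF HG Heps).
- exact: (inst_IntNmp HD HF HG Heps).
- exact: (inst_IntNmmp HD HF HG Heps).
- exact: (inst_DownStar HD HF HG Heps).
- exact: (inst_Down HD HF HG Heps).
Qed.
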